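(* Let $P\subset\mathbb R^d$ be a $d$-polytope, $d\geq 3$, $S$ a simplex facet of $P$ in bounded position, and $\mathcal F,\mathcal N\subseteq\operatorname{adj}(S)$ disjoint with $\mathcal F$ nonsimple. Assume every vertex of $P$ lies in at least one facet of $P$ not in $\mathcal F\cup\mathcal N\cup\{S\}$. Then for $v\in V_S(\mathcal F,\mathcal N;P)$, the polytope $Q=\operatorname{conv}(P\cup\{v\})$ satisfies $f_0(Q)=f_0(P)+1$.
   Context: $f_0$ denotes the number of vertices. For a facet $F$ of $P$ let $H_F=\{x:\langle x,a_F\rangle=\ell_F\}$ be its affine hull, oriented so that $P\subseteq\{x:\langle x,a_F\rangle\geq\ell_F\}$; $H_F^+$, $H_F^-$ are the open sides $\{>\}$, $\{<\}$. Two facets are adjacent if they share a ridge; $\operatorname{adj}(S)$ is the set of facets adjacent to $S$. A simplex facet is a facet combinatorially equivalent to a $(d-1)$-simplex. $S$ is in bounded position if for every set of $d$ facets in $\operatorname{adj}(S)$ their hyperplanes meet in a point of $H_S^-$. $\mathcal F\subseteq\operatorname{adj}(S)$ is nonsimple if there is no pair of adjacent facets $G,G'\in\mathcal F$ having a common $(d-3)$-face with $S$. $V_S(\mathcal F,\mathcal N;P)$ is the set of points lying in $H_F^-$ for $F\in\mathcal N\cup\{S\}$, in $H_F$ for $F\in\mathcal F$, and in $H_F^+$ for all other facets $F$ of $P$. *)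

(* Defs.v *)
(* Points of R^d are row vectors 'rV[R]_d over a real field R;
   subsets of R^d are predicates 'rV[R]_d -> Prop. *)
From mathcomp Require Import all_boot all_order all_algebra.
Set Implicit Arguments. Unset Strict Implicit. Unset Printing Implicit Defensive.
Import Order.TTheory GRing.Theory Num.Theory.
Local Open Scope ring_scope.

Section Polytopes.
Variables (R : realFieldType) (d : nat).
Notation pt := 'rV[R]_d.

Definition dot (x y : pt) : R := \sum_(i < d) x 0 i * y 0 i.

Definition conv (V : seq pt) : pt -> Prop := fun x =>
  exists w : 'I_(size V) -> R, (forall i, 0 <= w i) /\ \sum_i w i = 1 /\
    x = \sum_i w i *: V`_i.

Definition aff_indep n (p : 'I_n -> pt) : Prop :=
  forall c : 'I_n -> R, \sum_i c i = 0 -> \sum_i c i *: p i = 0 ->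
    forall i, c i = 0.

Definition dim_eq (A : pt -> Prop) (k : nat) : Prop :=
  (exists p : 'I_k.+1 -> pt, (forall i, A (p i)) /\ aff_indep p) /\
  ~ (exists p : 'I_k.+2 -> pt, (forall i, A (p i)) /\ aff_indep p).

Definition supports (P : pt -> Prop) (a : pt) (l : R) : Prop :=
  forall y, P y -> l <= dot y a.

(* faces of P (including the empty face and P itself) *)
Definition face (P A : pt -> Prop) : Prop :=
  exists a l, supports P a l /\ (forall y, A y <-> P y /\ dot y a = l).

Definition vertex (P : pt -> Prop) (x : pt) : Prop :=
  exists A, face P A /\ dim_eq A 0 /\ A x.

Definition has_f0 (P : pt -> Prop) (n : nat) : Prop :=
  exists s : seq pt, uniq s /\ size s = n /\ (forall x, vertex P x <-> x \in s).

Definition facet (P F : pt -> Prop) : Prop := face P F /\ dim_eq F d.-1.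

Definition ridge (P A : pt -> Prop) : Prop := face P A /\ dim_eq A d.-2.

(* relative position of x w.r.t. the oriented affine hull H_F of a facet F,
   i.e. H_F = {<x,a> = l} with P in {<x,a> >= l} *)
Definition hyp_pos (P F : pt -> Prop) (rel : R -> R -> bool) (x : pt) : Prop :=
  exists a l, a != 0 /\ supports P a l /\ (forall y, F y <-> P y /\ dot y a = l) /\
    rel (dot x a) l.

Definition in_H P F x := hyp_pos P F (fun u l => u == l) x.
Definition in_Hplus P F x := hyp_pos P F (fun u l => l < u) x.
Definition in_Hminus P F x := hyp_pos P F (fun u l => u < l) x.

Definition adjacent (P F G : pt -> Prop) : Prop :=
  facet P F /\ facet P G /\ F <> G /\
  exists A, ridge P A /\ (forall x, A x -> F x /\ G x).

(* S is a simplex facet: a facet combinatorially a (d-1)-simplex,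
   i.e. a (d-1)-polytope with exactly d vertices *)
Definition simplex_facet (P S : pt -> Prop) : Prop := facet P S /\ has_f0 S d.

Definition bounded_position (P S : pt -> Prop) : Prop :=
  forall g : 'I_d -> (pt -> Prop),
    (forall i j, g i = g j -> i = j) -> (forall i, adjacent P S (g i)) ->
    exists x, (forall i, in_H P (g i) x) /\
      (forall y, (forall i, in_H P (g i) y) -> y = x) /\ in_Hminus P S x.

Definition nonsimple (P S : pt -> Prop) (Fam : (pt -> Prop) -> Prop) : Prop :=
  ~ exists G G', Fam G /\ Fam G' /\ adjacent P G G' /\
      exists A, face P A /\ dim_eq A (d - 3) /\
        (forall x, A x -> G x /\ G' x /\ S x).

Definition V_S (P S : pt -> Prop) (Fam Nam : (pt -> Prop) -> Prop) (x : pt) : Prop :=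
  in_Hminus P S x /\
  (forall F, Nam F -> in_Hminus P F x) /\
  (forall F, Fam F -> in_H P F x) /\
  (forall F, facet P F -> ~ Fam F -> ~ Nam F -> F <> S -> in_Hplus P F x).

End Polytopes.

(* Main.v *)
Require Import Defs.
From mathcomp Require Import all_boot all_order all_algebra.
From mathcomp Require Import ring lra.
From Stdlib Require Import Classical.
Set Implicit Arguments. Unset Strict Implicit. Unset Printing Implicit Defensive.
Import Order.TTheory GRing.Theory Num.Theory.
Local Open Scope ring_scope.

Section Aux.
Variables (R : realFieldType) (d : nat).
Notation pt := 'rV[R]_d.

Lemma dotD (x y a : pt) : dot (x + y) a = dot x a + dot y a.
Proof. rewrite /dot -big_split; apply: eq_bigr => i _; rewrite mxE mulrDl. by []. Qed.

Lemma dotZ c (x a : pt) : dot (c *: x) a = c * dot x a.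
Proof. rewrite /dot mulr_sumr; apply: eq_bigr => i _; by rewrite mxE mulrA. Qed.

Lemma dot0 (a : pt) : dot 0 a = 0.
Proof. rewrite /dot big1 // => i _; by rewrite mxE mul0r. Qed.

Lemma dot_sum n (w : 'I_n -> R) (F : 'I_n -> pt) a :
  dot (\sum_i w i *: F i) a = \sum_i w i * dot (F i) a.
Proof.
rewrite (big_morph (fun x => dot x a) (fun x y => dotD x y a) (dot0 a)).
by apply: eq_bigr => i _; rewrite dotZ.
Qed.

Lemma conv_ge (V : seq pt) c k y : (forall i : 'I_(size V), k <= dot V`_i c) ->
  conv V y -> k <= dot y c.
Proof.
move=> H [w [w0 [w1 ->]]]; rewrite dot_sum.
have -> : \sum_i w i * dot V`_i c = k + \sum_i w i * (dot V`_i c - k).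
  rewrite [X in _ = k + X](eq_bigr (fun i => w i * dot V`_i c - w i * k)); last first.
    by move=> i _; rewrite mulrBr.
  by rewrite sumrB -mulr_suml w1 mul1r addrC subrK.
rewrite lerDl; apply: sumr_ge0 => i _; apply: mulr_ge0 => //.
by rewrite subr_ge0.
Qed.

Lemma conv_nth (V : seq pt) (i : 'I_(size V)) : conv V V`_i.
Proof.
exists (fun j => if j == i then 1 else 0); split; first by move=> j; case: ifP.
split; first by rewrite (bigD1 i) //= eqxx big1 ?addr0 // => j /negbTE ->.
rewrite (bigD1 i) //= eqxx scale1r big1 ?addr0 // => j /negbTE ->.
by rewrite scale0r.
Qed.

Lemma supportsP (V : seq pt) c k :
  supports (conv V) c k <-> forall i : 'I_(size V), k <= dot V`_i c.
Proof.
split; first by move=> H i; apply: H; apply: conv_nth.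
by move=> H y; apply: conv_ge.
Qed.

Definition vtx (P : pt -> Prop) x := exists c k, supports P c k /\ P x /\
  dot x c = k /\ (forall y, P y -> dot y c = k -> y = x).

Lemma vertexP P x : vertex P x <-> vtx P x.
Proof.
split.
  move=> [A [[a [l [sup HA]]] [[_ Hn] Ax]]].
  have [Px ex] := (HA x).1 Ax.
  exists a, l; do 3!split => //.
  move=> y Py ey; apply: NNPP => nxy; apply: Hn.
  exists (fun i : 'I_2 => if i == ord0 then y else x); split.
    by move=> i; case: ifP => _; apply/HA.
  move=> c' sc ss i.
  move: sc ss; rewrite !big_ord_recl !big_ord0 /= !addr0 => sc ss.
  have c1 : c' (lift ord0 ord0) = - c' ord0 by apply/eqP; rewrite -addr_eq0 addrC sc.
  rewrite c1 scaleNr -scalerBr in ss.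
  have : c' ord0 = 0.
    apply/eqP; move: ss => /eqP; rewrite scaler_eq0 subr_eq0.
    by case/orP => // /eqP => h; exfalso; apply: nxy.
  move=> c0; case: i => [[|[|m]] Hm] //.
    by rewrite (_ : Ordinal Hm = ord0) //; apply: val_inj.
  by rewrite (_ : Ordinal Hm = lift ord0 ord0) ?c1 ?c0 ?oppr0 //; apply: val_inj.
move=> [c [k [sup [Px [ex uq]]]]].
exists (fun y => P y /\ dot y c = k); split.
  by exists c, k.
split; last by [].
split.
  exists (fun _ => x); split => // c' sc _ i.
  by move: sc; rewrite big_ord1 => sc; rewrite (ord1 i).
move=> [p [Hp ai]].
have e0 : p ord0 = x by case: (Hp ord0) => *; apply: uq.
have e1 : p (lift ord0 ord0) = x by case: (Hp (lift ord0 ord0)) => *; apply: uq.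
have := ai (fun i => if i == ord0 then 1 else -1).
rewrite !big_ord_recl !big_ord0 /= e0 e1 scaleN1r scale1r !addr0 !subrr.
move=> /(_ (erefl _) (erefl _) ord0) /=; apply/eqP; exact: oner_neq0.
Qed.

Lemma nth_lift (v : pt) (V : seq pt) (i : 'I_(size V)) :
  (v :: V)`_(lift ord0 i : 'I_(size (v :: V))) = V`_i.
Proof. by rewrite lift0. Qed.

Lemma conv_cons (v : pt) V y : conv V y -> conv (v :: V) y.
Proof.
move=> [w [w0 [w1 ->]]].
exists (fun j : 'I_(size V).+1 => if unlift ord0 j is Some i then w i else 0).
split; first by move=> j; case: (unlift ord0 j).
rewrite !big_ord_recl unlift_none scale0r !add0r; split.
  by rewrite -w1; apply: eq_bigr => i _; rewrite liftK.
by apply: eq_bigr => i _; rewrite liftK nth_lift.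
Qed.

Lemma conv_v (v : pt) V : conv (v :: V) v.
Proof. by have := @conv_nth (v :: V) (@ord0 (size V)). Qed.

Lemma conv_dec (v : pt) V y : conv (v :: V) y -> y = v \/
  exists s p, 0 <= s < 1 /\ conv V p /\ y = s *: v + (1 - s) *: p.
Proof.
move=> [w [w0 [w1 ->]]].
rewrite big_ord_recl in w1; rewrite big_ord_recl.
set r := \sum_(i < size V) w (lift ord0 i) in w1.
have r0 : 0 <= r by apply: sumr_ge0.
under eq_bigr => i _ do rewrite nth_lift.
case: (boolP (r == 0)) => [/eqP rz | rnz].
  left.
  have wz : forall i, w (lift ord0 i) = 0.
    by move=> i; apply: (psumr_eq0P _ rz).
  rewrite big1 ?addr0; last by move=> i _; rewrite wz scale0r.
  have -> : w ord0 = 1 by rewrite -w1 rz addr0.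
  by rewrite scale1r.
right.
have rp : 0 < r by rewrite lt0r rnz.
exists (w ord0), (\sum_i (w (lift ord0 i) / r) *: V`_i).
have e1 : 1 - w ord0 = r by move: w1; lra.
split; first by rewrite w0 /=; move: rp; rewrite -e1; lra.
split.
  exists (fun i => w (lift ord0 i) / r); split.
    by move=> i; apply: divr_ge0.
  by split => //; rewrite -mulr_suml divff.
rewrite e1 scaler_sumr; congr (_ + _); apply: eq_bigr => i _.
by rewrite scalerA mulrC divfK.
Qed.

Lemma dotDr (x a b : pt) : dot x (a + b) = dot x a + dot x b.
Proof. rewrite /dot -big_split; apply: eq_bigr => i _; by rewrite mxE mulrDr. Qed.

Lemma dotZr c (x a : pt) : dot x (c *: a) = c * dot x a.
Proof. rewrite /dot mulr_sumr; apply: eq_bigr => i _; by rewrite mxE mulrCA. Qed.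

Lemma mix_ge (s a b k : R) : 0 <= s < 1 -> k <= a -> k <= b -> k <= s * a + (1 - s) * b.
Proof. move=> /andP [s0 s1] ha hb; nra. Qed.

Lemma mix_eq (s a b k : R) : 0 <= s < 1 -> k <= a -> k <= b -> s * a + (1 - s) * b = k ->
  b = k /\ (s = 0 \/ a = k).
Proof.
move=> /andP [s0 s1] ha hb e.
have h1 : 0 <= s * (a - k) by apply: mulr_ge0; lra.
have h2 : 0 <= (1 - s) * (b - k) by apply: mulr_ge0; lra.
have h3 : s * (a - k) + (1 - s) * (b - k) = 0 by rewrite -e; ring.
have h4 : s * (a - k) = 0 by lra.
have h5 : (1 - s) * (b - k) = 0 by lra.
split.
  move/eqP: h5; rewrite mulf_eq0 => /orP [/eqP|/eqP]; lra.
move/eqP: h4; rewrite mulf_eq0 => /orP [/eqP|/eqP] h; [left|right]; lra.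
Qed.

Lemma vtx_in V x : vtx (conv V) x -> x \in V.
Proof.
move=> [c [k [sup [[w [w0 [w1 ex]]] [e uq]]]]].
have hs : \sum_i w i * (dot V`_i c - k) = 0.
  move: e; rewrite ex dot_sum => e'.
  rewrite (eq_bigr (fun i => w i * dot V`_i c - w i * k)); last by move=> i _; rewrite mulrBr.
  by rewrite sumrB -mulr_suml w1 mul1r e' subrr.
have hge : forall i, 0 <= w i * (dot V`_i c - k).
  by move=> i; apply: mulr_ge0 => //; rewrite subr_ge0; exact: ((supportsP V c k).1 sup i).
case: (boolP [exists i, 0 < w i]) => [/existsP [i wi] | /existsPn hn].
  have := @psumr_eq0P _ _ _ _ (fun i _ => hge i) hs i isT.
  move=> /eqP; rewrite mulf_eq0 (gt_eqF wi) /= subr_eq0 => /eqP di.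
  have <- : V`_i = x by apply: uq; [apply: conv_nth | ].
  exact: mem_nth.
have : \sum_i w i = 0.
  by apply: big1 => i _; apply/eqP; rewrite eq_le w0 andbT leNgt (negbTE (hn i)).
by rewrite w1 => /eqP; rewrite oner_eq0.
Qed.

Lemma fin_sub (Pr : pt -> Prop) (s : seq pt) :
  exists s', uniq s' /\ forall x, (Pr x /\ x \in s) <-> x \in s'.
Proof.
elim: s => [|a s [s' [u H]]]; first by exists [::]; split => // x; split => [[]|].
case: (classic (Pr a)) => Pa; last first.
  exists s'; split => // x; rewrite -H in_cons; split.
    case=> Px /orP [/eqP ea|xs] //; by subst.
  by case=> Px xs; rewrite xs orbT.
case: (boolP (a \in s')) => ins.
  exists s'; split => // x; rewrite -H in_cons; split.
    case=> Px /orP [/eqP ea|xs] //; subst; by case/H: ins.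
  by case=> Px xs; rewrite xs orbT.
exists (a :: s'); split; first by rewrite /= ins u.
move=> x; rewrite !in_cons; split.
  case=> Px /orP [->|xs] //; apply/orP; right; exact/H.
by case/orP => [/eqP ->|/H [Px xs]]; [rewrite eqxx|rewrite xs orbT].
Qed.

End Aux.

Theorem corollary2p12 (R : realFieldType) (d : nat) (V : seq 'rV[R]_d)
    (S : 'rV[R]_d -> Prop) (Fam Nam : ('rV[R]_d -> Prop) -> Prop) (v : 'rV[R]_d) :
  (3 <= d)%N ->
  dim_eq (conv V) d ->
  simplex_facet (conv V) S ->
  bounded_position (conv V) S ->
  (forall G, Fam G -> adjacent (conv V) S G) ->
  (forall G, Nam G -> adjacent (conv V) S G) ->
  (forall G, Fam G -> ~ Nam G) ->
  nonsimple (conv V) S Fam ->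
  (forall x, vertex (conv V) x ->
     exists F, facet (conv V) F /\ F x /\ ~ Fam F /\ ~ Nam F /\ F <> S) ->
  V_S (conv V) S Fam Nam v ->
  exists n, has_f0 (conv V) n /\ has_f0 (conv (v :: V)) n.+1.
Proof.
move=> _ _ _ _ _ _ _ _ Hvf [[aS [lS [_ [supS [_ HvS]]]]] [_ [_ Hplus]]].
have HvS' : dot v aS < lS by [].
have PQ : forall y, conv V y -> conv (v :: V) y by move=> y; apply: conv_cons.
have vnP : ~ conv V v by move=> /supS; lra.
have suppQ : forall c k, supports (conv V) c k -> k <= dot v c ->
    supports (conv (v :: V)) c k.
  move=> c k sP kv y /conv_dec [->//|[s [p [s01 [Pp ->]]]]].
  by rewrite dotD !dotZ; apply: mix_ge => //; apply: sP.
have key : forall x, vtx (conv (v :: V)) x <-> x = v \/ vtx (conv V) x.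
  move=> x; split.
    move=> [c [k [sQ [Qx [ex uq]]]]].
    case: (conv_dec Qx) => [->|[s [p [s01 [Pp exx]]]]]; first by left.
    right.
    have hv := sQ v (conv_v v V).
    have hp := sQ p (PQ p Pp).
    have dp : dot p c = k.
      by move: ex; rewrite exx dotD !dotZ => ex; case: (mix_eq s01 hv hp ex).
    have px : p = x := uq p (PQ p Pp) dp.
    exists c, k; split; first by move=> y Py; apply: sQ; apply: PQ.
    split; first by rewrite -px.
    split => // y Py; apply: uq; exact: PQ.
  case => [->|].
    exists aS, (dot v aS); split.
      apply: suppQ => // y Py; have := supS y Py; lra.
    split; first exact: conv_v.
    split => // y Qy ey.
    case: (conv_dec Qy) => [//| [s [p [s01 [Pp ey']]]]].
    have hp := supS p Pp.
    move: ey; rewrite ey' dotD !dotZ => ey.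
    have [] := mix_eq s01 (lexx (dot v aS)) (ltW (lt_le_trans HvS hp)) ey => h _.
    exfalso; lra.
  move=> vx; have [c [k [sP [Px [ex uq]]]]] := vx.
  have [F [fF [Fx [nF [nN nS]]]]] := Hvf x ((vertexP _ _).2 vx).
  have [a [l [_ [sF [HF lv]]]]] := Hplus F fF nF nN nS.
  have lv' : l < dot v a by [].
  have xa : dot x a = l by case: ((HF x).1 Fx).
  have pos : 0 < dot v a - l by rewrite subr_gt0.
  set t := (`|k - dot v c| + 1) / (dot v a - l).
  have ht : t * (dot v a - l) = `|k - dot v c| + 1 by rewrite /t divfK // gt_eqF.
  have tpos : 0 < t by rewrite /t divr_gt0 // ltr_wpDl.
  have nb := ler_norm (k - dot v c).
  have strict : k + t * l < dot v (c + t *: a).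
    rewrite dotDr dotZr; nra.
  have suppP : supports (conv V) (c + t *: a) (k + t * l).
    move=> y Py; rewrite dotDr dotZr; have := sP y Py; have := sF y Py; nra.
  exists (c + t *: a), (k + t * l); split.
    by apply: suppQ => //; apply: ltW.
  split; first exact: PQ.
  split; first by rewrite dotDr dotZr ex xa.
  move=> y Qy ey.
  case: (conv_dec Qy) => [ey'| [s [p [s01 [Pp ey']]]]].
    by move: strict; rewrite -ey' ey ltxx.
  move: ey; rewrite ey' dotD !dotZ => ey.
  have [hp [s0|]] := mix_eq s01 (ltW strict) (suppP p Pp) ey; last first.
    by move=> h; move: strict; rewrite h ltxx.
  have hpc : dot p c = k.
    move: hp; rewrite dotDr dotZr; have := sP p Pp; have := sF p Pp; nra.
  rewrite s0 scale0r add0r subr0 scale1r.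
  exact: uq.
have [sP [uP HsP]] := fin_sub (vtx (conv V)) V.
exists (size sP); split.
  exists sP; split => //; split => // x; rewrite vertexP -HsP; split.
    by move=> h; split => //; apply: vtx_in.
  by case.
exists (v :: sP); split.
  rewrite /= uP andbT; apply/negP => /HsP [[c [k [_ [Pv _]]]] _]; exact: vnP.
split => // x; rewrite vertexP key; split.
  case=> [->|h]; first by rewrite mem_head.
  rewrite in_cons; apply/orP; right; apply/HsP; split => //; exact: vtx_in.
by rewrite in_cons => /orP [/eqP ->|/HsP [h _]]; [left | right].
Qed.
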